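(* The maps $U_r$ for $r \le m$ are injective if and only if $U_m$ is injective.
   Context: Let $A \ge B \ge C \ge 1$ be integers, let $\Bbbk$ be a field, and let $R = \Bbbk[x,y,z]/(x^A,y^B,z^C)$ with its standard grading ($x,y,z$ of degree one), $R = \bigoplus_{r=0}^{e} R_r$ where $e := A+B+C-3$. For each $r$, let $U_r : R_r \to R_{r+1}$ be the map given by multiplication by $x+y+z$. Let $m := \lfloor \frac{e-1}{2} \rfloor$, so that $U_m$ is a map closest to the middle of $R$. *)

(* Defs.v *)
From mathcomp Require Import all_boot all_order all_algebra.
Set Implicit Arguments. Unset Strict Implicit. Unset Printing Implicit Defensive.
Import GRing.Theory.
Local Open Scope ring_scope.

(* R = k[x,y,z]/(x^A,y^B,z^C) has the k-basis of monomials x^a y^b z^c with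
   a < A, b < B, c < C.  An exponent triple is an element of 'I_A * 'I_B * 'I_C. *)
Definition expo (A B C : nat) := ('I_A * 'I_B * 'I_C)%type.
Definition ex_x A B C (t : expo A B C) : nat := t.1.1.
Definition ex_y A B C (t : expo A B C) : nat := t.1.2.
Definition ex_z A B C (t : expo A B C) : nat := t.2.
Definition mdeg A B C (t : expo A B C) : nat := (ex_x t + ex_y t + ex_z t)%N.

Definition mon (A B C r : nat) := {t : expo A B C | mdeg t == r}.

(* The graded piece R_r, as the k-space of coefficient vectors w.r.t. the
   monomial basis. *)
Definition Rdeg (K : fieldType) (A B C r : nat) := {ffun mon A B C r -> K}.

Definition succ_mon A B C (t t' : expo A B C) : bool :=
  [|| [&& ex_x t' == (ex_x t).+1, ex_y t' == ex_y t & ex_z t' == ex_z t],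
      [&& ex_x t' == ex_x t, ex_y t' == (ex_y t).+1 & ex_z t' == ex_z t]
    | [&& ex_x t' == ex_x t, ex_y t' == ex_y t & ex_z t' == (ex_z t).+1]].

(* U_r : R_r -> R_{r+1}, multiplication by x+y+z.  The coefficient of a
   monomial t' of degree r+1 in (x+y+z) f is the sum of the coefficients of f
   at the monomials t with t' = t*x, t*y or t*z; products falling outside the
   bounds (x^A, y^B, z^C) vanish in R, which is automatic since t' ranges
   over the basis of R_{r+1}. *)
Definition U (K : fieldType) (A B C r : nat) (f : Rdeg K A B C r) :
    Rdeg K A B C r.+1 :=
  [ffun t' : mon A B C r.+1 =>
     \sum_(t : mon A B C r | succ_mon (val t) (val t')) f t].

(* Main.v *)
Require Import Defs.
From mathcomp Require Import all_boot all_order all_algebra.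
From mathcomp Require Import zify.
Set Implicit Arguments. Unset Strict Implicit. Unset Printing Implicit Defensive.
Import GRing.Theory.
Local Open Scope ring_scope.

Definition decr n (a : 'I_n) : 'I_n := Ordinal (leq_ltn_trans (leq_pred a) (ltn_ord a)).

Definition px {A B C} (t : expo A B C) : option (expo A B C) :=
  if (0 < ex_x t)%N then Some (decr t.1.1, t.1.2, t.2) else None.
Definition py {A B C} (t : expo A B C) : option (expo A B C) :=
  if (0 < ex_y t)%N then Some (t.1.1, decr t.1.2, t.2) else None.
Definition pz {A B C} (t : expo A B C) : option (expo A B C) :=
  if (0 < ex_z t)%N then Some (t.1.1, t.1.2, decr t.2) else None.

Lemma expo_eq A B C (s t : expo A B C) :
  ex_x s = ex_x t -> ex_y s = ex_y t -> ex_z s = ex_z t -> s = t.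
Proof.
case: s => [[a b] c]; case: t => [[a' b'] c']; rewrite /ex_x /ex_y /ex_z /=.
by move=> /val_inj-> /val_inj-> /val_inj->.
Qed.

Lemma px_spec A B C (t s : expo A B C) : px t = Some s ->
  [/\ ex_x s = (ex_x t).-1, (0 < ex_x t)%N, ex_y s = ex_y t & ex_z s = ex_z t].
Proof. by rewrite /px; case: ifP => // h [<-]. Qed.
Lemma py_spec A B C (t s : expo A B C) : py t = Some s ->
  [/\ ex_y s = (ex_y t).-1, (0 < ex_y t)%N, ex_x s = ex_x t & ex_z s = ex_z t].
Proof. by rewrite /py; case: ifP => // h [<-]. Qed.
Lemma pz_spec A B C (t s : expo A B C) : pz t = Some s ->
  [/\ ex_z s = (ex_z t).-1, (0 < ex_z t)%N, ex_x s = ex_x t & ex_y s = ex_y t].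
Proof. by rewrite /pz; case: ifP => // h [<-]. Qed.

Lemma px_deg A B C (t s : expo A B C) : px t = Some s -> mdeg t = (mdeg s).+1.
Proof. move/px_spec=> [h1 h2 h3 h4]; rewrite /mdeg h1 h3 h4; lia. Qed.
Lemma py_deg A B C (t s : expo A B C) : py t = Some s -> mdeg t = (mdeg s).+1.
Proof. move/py_spec=> [h1 h2 h3 h4]; rewrite /mdeg h1 h3 h4; lia. Qed.
Lemma pz_deg A B C (t s : expo A B C) : pz t = Some s -> mdeg t = (mdeg s).+1.
Proof. move/pz_spec=> [h1 h2 h3 h4]; rewrite /mdeg h1 h3 h4; lia. Qed.

Lemma sx A B C (t t' : expo A B C) :
  [&& ex_x t' == (ex_x t).+1, ex_y t' == ex_y t & ex_z t' == ex_z t] = (px t' == Some t).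
Proof.
  apply/idP/eqP.
  + move=> /and3P [/eqP h1 /eqP h2 /eqP h3].
    rewrite /px h1 /=; congr Some; apply: expo_eq => //=.
    by rewrite /ex_x /= -/(ex_x t') h1.
  + move/px_spec=> [h1 h2 h3 h4]; apply/and3P; split; apply/eqP; lia.
Qed.
Lemma sy A B C (t t' : expo A B C) :
  [&& ex_x t' == ex_x t, ex_y t' == (ex_y t).+1 & ex_z t' == ex_z t] = (py t' == Some t).
Proof.
  apply/idP/eqP.
  + move=> /and3P [/eqP h1 /eqP h2 /eqP h3].
    rewrite /py h2 /=; congr Some; apply: expo_eq => //=.
    by rewrite /ex_y /= -/(ex_y t') h2.
  + move/py_spec=> [h1 h2 h3 h4]; apply/and3P; split; apply/eqP; lia.
Qed.
Lemma sz A B C (t t' : expo A B C) :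
  [&& ex_x t' == ex_x t, ex_y t' == ex_y t & ex_z t' == (ex_z t).+1] = (pz t' == Some t).
Proof.
  apply/idP/eqP.
  + move=> /and3P [/eqP h1 /eqP h2 /eqP h3].
    rewrite /pz h3 /=; congr Some; apply: expo_eq => //=.
    by rewrite /ex_z /= -/(ex_z t') h3.
  + move/pz_spec=> [h1 h2 h3 h4]; apply/and3P; split; apply/eqP; lia.
Qed.

Lemma succE A B C (t t' : expo A B C) :
  succ_mon t t' = [|| px t' == Some t, py t' == Some t | pz t' == Some t].
Proof. by rewrite /succ_mon sx sy sz. Qed.

Lemma comm_xy A B C (t : expo A B C) : obind px (py t) = obind py (px t).
Proof.
case: t => [[a b] c]; rewrite /px /py /ex_x /ex_y /=.
by case ha: (0 < a)%N; case hb: (0 < b)%N => /=; rewrite ?ha ?hb.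
Qed.
Lemma comm_xz A B C (t : expo A B C) : obind px (pz t) = obind pz (px t).
Proof.
case: t => [[a b] c]; rewrite /px /pz /ex_x /ex_z /=.
by case ha: (0 < a)%N; case hb: (0 < c)%N => /=; rewrite ?ha ?hb.
Qed.
Lemma comm_yz A B C (t : expo A B C) : obind py (pz t) = obind pz (py t).
Proof.
case: t => [[a b] c]; rewrite /py /pz /ex_y /ex_z /=.
by case ha: (0 < b)%N; case hb: (0 < c)%N => /=; rewrite ?ha ?hb.
Qed.

Definition ext (K : fieldType) A B C r (f : Rdeg K A B C r) (t : expo A B C) : K :=
  if (insub t : option (mon A B C r)) is Some s then f s else 0.

Lemma ext_val (K : fieldType) A B C r (f : Rdeg K A B C r) (s : mon A B C r) :
  ext f (val s) = f s.
Proof. by rewrite /ext valK. Qed.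

Lemma ext0 (K : fieldType) A B C r (f : Rdeg K A B C r) t :
  mdeg t != r -> ext f t = 0.
Proof. by move=> h; rewrite /ext insubN. Qed.

Definition Lsum (K : fieldType) A B C (F : expo A B C -> K) t : K :=
  oapp F 0 (px t) + oapp F 0 (py t) + oapp F 0 (pz t).

Lemma sum_disj (K : fieldType) (I : finType) (P Q : pred I) (F : I -> K) :
  (forall i, P i -> ~~ Q i) ->
  \sum_(i | P i || Q i) F i = \sum_(i | P i) F i + \sum_(i | Q i) F i.
Proof.
move=> h; rewrite (bigID P) /=; congr (_ + _); apply: eq_bigl => i.
  by case: (boolP (P i)) => hp; rewrite ?hp ?(negbTE hp) /= ?andbF ?andbT.
case: (boolP (P i)) => hp /=; last by rewrite andbT.
by rewrite (negbTE (h i hp)).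
Qed.

Lemma sum_one (K : fieldType) A B C r (f : Rdeg K A B C r) (o : option (expo A B C)) :
  (forall s, o = Some s -> mdeg s = r) ->
  \sum_(t : mon A B C r | o == Some (val t)) f t = oapp (ext f) 0 o.
Proof.
case: o => [s|] hs /=; last by rewrite big_pred0.
have hs' : mdeg s == r by rewrite (hs s erefl).
rewrite (big_pred1 (exist _ s hs')) /=; first by rewrite -(ext_val f (exist _ s hs')).
by move=> t /=; rewrite -val_eqE /= eq_sym.
Qed.

Lemma conv (K : fieldType) A B C r (f : Rdeg K A B C r) (t' : mon A B C r.+1) :
  U f t' = Lsum (ext f) (val t').
Proof.
have hd := valP t'; move: hd => /eqP hd.
rewrite ffunE (eq_bigl _ _ (fun t => succE (val t) (val t'))).
rewrite sum_disj; last first.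
  move=> t /eqP /px_spec [h1 h2 h3 h4]; apply/negP => /orP [/eqP/py_spec|/eqP/pz_spec];
  case=> *; lia.
rewrite sum_disj; last first.
  move=> t /eqP /py_spec [h1 h2 h3 h4]; apply/negP => /eqP/pz_spec; case=> *; lia.
rewrite /Lsum addrA.
rewrite sum_one; last by move=> s /px_deg; rewrite hd => -[].
rewrite sum_one; last by move=> s /py_deg; rewrite hd => -[].
rewrite sum_one; last by move=> s /pz_deg; rewrite hd => -[].
by [].
Qed.

Lemma Lsum_eq (K : fieldType) A B C (F1 F2 : expo A B C -> K) t :
  F1 =1 F2 -> Lsum F1 t = Lsum F2 t.
Proof.
by move=> h; rewrite /Lsum; case: (px t) => [?|]; case: (py t) => [?|];
  case: (pz t) => [?|] /=; rewrite ?h.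
Qed.

Lemma oapp_bind (K : fieldType) A B C (F : expo A B C -> K) (p : expo A B C -> option (expo A B C)) (o : option (expo A B C)) :
  oapp (fun t => oapp F 0 (p t)) 0 o = oapp F 0 (obind p o).
Proof. by case: o. Qed.

Lemma gen (K : fieldType) A B C r (f : Rdeg K A B C r)
  (p : expo A B C -> option (expo A B C)) (t0 : mon A B C r) s0 :
  (forall t, obind p (px t) = obind px (p t)) ->
  (forall t, obind p (py t) = obind py (p t)) ->
  (forall t, obind p (pz t) = obind pz (p t)) ->
  (forall t s, p t = Some s -> mdeg t = (mdeg s).+1) ->
  p s0 = Some (val t0) -> f t0 != 0 -> U f = 0 ->
  exists g : Rdeg K A B C r.+1, g != 0 /\ U g = 0.
Proof.
move=> cx cy cz hpd hp0 hf0 hUf.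
set F := ext f.
have hLF : forall t, Lsum F t = 0.
  move=> t; case: (boolP (mdeg t == r.+1)) => ht.
    by rewrite -[t]/(val (exist _ t ht : mon A B C r.+1)) -conv hUf ffunE.
  rewrite /Lsum.
  have H : forall q : expo A B C -> option (expo A B C),
      (forall t s, q t = Some s -> mdeg t = (mdeg s).+1) -> oapp F 0 (q t) = 0.
    move=> q hq; case E: (q t) => [s|] //=; rewrite /F ext0 //.
    by apply: contra ht => /eqP hs; rewrite (hq _ _ E) hs.
  by rewrite !H ?addr0 //; [exact: pz_deg | exact: py_deg | exact: px_deg].
pose G t := oapp F 0 (p t).
pose g : Rdeg K A B C r.+1 := [ffun s : mon A B C r.+1 => G (val s)].
have hs0 : mdeg s0 == r.+1 by rewrite (hpd _ _ hp0) (eqP (valP t0)).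
exists g; split.
  apply/eqP => /ffunP /(_ (exist _ s0 hs0)); rewrite !ffunE /G /= hp0 /=. move=> h; move: hf0; rewrite -(ext_val f t0) /= -/F h eqxx. by [].
apply/ffunP => t''; rewrite conv ffunE.
have eG : ext g =1 G.
  move=> t; case: (boolP (mdeg t == r.+1)) => h.
    by rewrite /ext insubT /= ffunE.
  rewrite ext0 // /G; case E: (p t) => [s|] //=; rewrite /F ext0 //.
  by apply: contra h => /eqP hs; rewrite (hpd _ _ E) hs.
rewrite (Lsum_eq _ eG) /Lsum /G !oapp_bind cx cy cz.
have := hLF; case: (p (val t'')) => [s|] /=; last by rewrite !addr0.
by move=> /(_ s); rewrite /Lsum.
Qed.

Lemma ex_px A B C (t : expo A B C) : ((ex_x t).+1 < A)%N -> exists s, px s = Some t.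
Proof.
move=> h; exists (Ordinal h, t.1.2, t.2); rewrite /px /=; congr Some.
by apply: expo_eq.
Qed.
Lemma ex_py A B C (t : expo A B C) : ((ex_y t).+1 < B)%N -> exists s, py s = Some t.
Proof.
move=> h; exists (t.1.1, Ordinal h, t.2); rewrite /py /=; congr Some.
by apply: expo_eq.
Qed.
Lemma ex_pz A B C (t : expo A B C) : ((ex_z t).+1 < C)%N -> exists s, pz s = Some t.
Proof.
move=> h; exists (t.1.1, t.1.2, Ordinal h); rewrite /pz /=; congr Some.
by apply: expo_eq.
Qed.

Lemma UB (K : fieldType) A B C r (f1 f2 : Rdeg K A B C r) :
  U (f1 - f2) = U f1 - U f2.
Proof.
apply/ffunP => t; rewrite !ffunE -sumrB; apply: eq_bigr => s _; by rewrite !ffunE.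
Qed.

Lemma U0 (K : fieldType) A B C r : U (0 : Rdeg K A B C r) = 0.
Proof. by rewrite -(subrr 0) UB subrr. Qed.

Lemma step (K : fieldType) A B C r : (r < A + B + C - 3)%N ->
  injective (@U K A B C r.+1) -> injective (@U K A B C r).
Proof.
move=> hr hinj f1 f2 hU; apply/eqP; rewrite -subr_eq0; apply/eqP.
set f := f1 - f2.
have hUf : U f = 0 by rewrite /f UB hU subrr.
apply/ffunP => t0; rewrite [RHS]ffunE; apply/eqP/negPn/negP => hne.
have fin : forall g : Rdeg K A B C r.+1, g != 0 -> U g = 0 -> False.
  move=> g /eqP hg hUg; apply: hg; apply: hinj; by rewrite hUg U0.
have ht0 := eqP (valP t0).
have [hx | hx] := ltnP (ex_x (val t0)).+1 A.
  have [s0 hs0] := ex_px hx.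
  have [g [hg1 hg2]] := gen (fun t => erefl) (@comm_xy _ _ _) (@comm_xz _ _ _) (@px_deg _ _ _) hs0 hne hUf.
  exact: fin hg1 hg2.
have [hy | hy] := ltnP (ex_y (val t0)).+1 B.
  have [s0 hs0] := ex_py hy.
  have [g [hg1 hg2]] := gen (fun t => esym (comm_xy t)) (fun t => erefl) (@comm_yz _ _ _) (@py_deg _ _ _) hs0 hne hUf.
  exact: fin hg1 hg2.
have [hz | hz] := ltnP (ex_z (val t0)).+1 C.
  have [s0 hs0] := ex_pz hz.
  have [g [hg1 hg2]] := gen (fun t => esym (comm_xz t)) (fun t => esym (comm_yz t)) (fun t => erefl) (@pz_deg _ _ _) hs0 hne hUf.
  exact: fin hg1 hg2.
move: ht0 hr; rewrite /mdeg => <-.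
have := ltn_ord (val t0).1.1; have := ltn_ord (val t0).1.2; have := ltn_ord (val t0).2.
move: hx hy hz; rewrite /ex_x /ex_y /ex_z. move: (val t0) => [[a b] c] /=; lia.
Qed.

Theorem corollary2 (K : fieldType) (A B C : nat)
    (hC : (1 <= C)%N) (hBC : (C <= B)%N) (hAB : (B <= A)%N) :
  let e := (A + B + C - 3)%N in
  let m := (e.-1)./2 in
  (forall r : nat, (r <= m)%N -> injective (@U K A B C r)) <->
  injective (@U K A B C m).
Proof.
move=> e m; split; first by move=> h; exact: h.
move=> hm.
have hme : (m <= e.-1)%N by rewrite /m leq_half_double; lia.
have H : forall k, (k <= m)%N -> injective (@U K A B C (m - k)).
  elim=> [|k IH] hk; first by rewrite subn0.
  have e1 : (m - k = (m - k.+1).+1)%N by lia.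
  apply: step; first by rewrite /e in hme; lia.
  rewrite -e1; apply: IH; lia.
move=> r hr; have := H (m - r)%N (leq_subr _ _).
by rewrite subKn.
Qed.
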